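(* Let $Q$ be a finite group of exponent $e$ and let $p$ be a prime. Then every simple $\mathbb{F}_p[Q]$-module $S$ satisfies $\dim_{\mathbb{F}_p} S\le \sqrt{e\cdot |Q|}$. *)

(* Defs.v *)
From mathcomp Require Import all_boot all_order all_algebra all_fingroup all_solvable all_field all_character.

(* Main.v *)
Require Import Defs.
From HB Require Import structures.
From mathcomp Require Import all_boot all_order all_algebra all_fingroup all_solvable all_field all_character.
Set Implicit Arguments. Unset Strict Implicit. Unset Printing Implicit Defensive.
Import GRing.Theory.
Local Open Scope ring_scope.

Section Frob.
Variables (K : fieldType) (p : nat) (pK : p \in [pchar K]).

Lemma frobnD j (x y : K) : (x + y) ^+ (p ^ j) = x ^+ (p ^ j) + y ^+ (p ^ j).
Proof.
elim: j => [|j IH]; first by rewrite !expr1.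
by rewrite expnSr !exprM IH -!(pFrobenius_autE pK) rmorphD.
Qed.

Lemma frobn_inj j (x y : K) : x ^+ (p ^ j) = y ^+ (p ^ j) -> x = y.
Proof.
elim: j => [|j IH]; first by rewrite !expr1.
rewrite expnSr !exprM -!(pFrobenius_autE pK) => /fmorph_inj; exact: IH.
Qed.

Lemma frobn0 j : (0 : K) ^+ (p ^ j) = 0.
Proof. by rewrite expr0n eqn0Ngt expn_gt0 (prime_gt0 (pcharf_prime pK)). Qed.
End Frob.

Section SpanS.
Variables (K : fieldType) (gT : finGroupType) (G : {group gT}) (n : nat).
Variable rG : mx_representation K G n.

Inductive inS : 'M[K]_n -> Prop :=
| inS0 : inS 0
| inSg g M : g \in G -> inS M -> inS (rG g + M).

Lemma inS_add M N : inS M -> inS N -> inS (M + N).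
Proof.
elim=> [|g M' Gg _ IH] hN; first by rewrite add0r.
by rewrite -addrA; apply: inSg => //; apply: IH.
Qed.

Lemma inS_rG g : g \in G -> inS (rG g).
Proof. by move=> Gg; rewrite -[rG g]addr0; apply: inSg => //; apply: inS0. Qed.

Lemma inS_mulg g N : g \in G -> inS N -> inS (rG g *m N).
Proof.
move=> Gg; elim=> [|h N' Gh _ IH]; first by rewrite mulmx0; apply: inS0.
by rewrite mulmxDr -repr_mxM //; apply: inSg => //; rewrite groupM.
Qed.

Lemma inS_mul M N : inS M -> inS N -> inS (M *m N).
Proof.
elim=> [|g M' Gg _ IH] hN; first by rewrite mul0mx; apply: inS0.
by rewrite mulmxDl; apply: inS_add; [exact: inS_mulg | exact: IH].
Qed.

Lemma inS_rep M : inS M -> exists c : gT -> nat, M = \sum_(x in G) rG x *+ c x.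
Proof.
elim=> [|g M' Gg _ [c ->]].
  by exists (fun _ => 0%N); rewrite big1.
exists (fun x => c x + (x == g))%N.
have -> : \sum_(x in G) rG x *+ (c x + (x == g))%N =
    \sum_(x in G) rG x *+ c x + \sum_(x in G) rG x *+ (x == g).
  by rewrite -big_split; apply: eq_bigr => x _; rewrite mulrnDr.
rewrite addrC; congr (_ + _).
rewrite (bigD1 g) //= eqxx mulr1n big1 ?addr0 // => x /andP[_ /negbTE ->].
by rewrite mulr0n.
Qed.

Lemma inS_envelop M : (forall a : K, inS a%:M) ->
  (M \in enveloping_algebra_mx rG)%MS -> inS M.
Proof.
move=> hS /envelop_mxP[a ->].
elim/big_rec: _ => [|x M' Gx hM]; first exact: inS0.
apply: inS_add => //; rewrite -mul_scalar_mx; apply: inS_mul => //.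
exact: inS_rG.
Qed.

End SpanS.

Lemma inS_card (K : finFieldType) p (pK : p \in [pchar K]) (gT : finGroupType)
   (G : {group gT}) n (rG : mx_representation K G n) :
  (forall M, inS rG M) -> (#|{: 'M[K]_n}| <= p ^ #|G|)%N.
Proof.
move=> hall.
have p_gt0 := prime_gt0 (pcharf_prime pK).
pose phi (c : {ffun 'I_#|G| -> 'I_p}) : 'M[K]_n :=
  \sum_(i < #|G|) rG (enum_val i) *+ c i.
have sur : forall M, M \in codom phi.
  move=> M; have [c defM] := inS_rep (hall M).
  apply/codomP; exists [ffun i => Ordinal (ltn_pmod (c (enum_val i)) p_gt0)].
  rewrite defM big_enum_val /phi; apply: eq_bigr => i _; rewrite ffunE /=.
  by rewrite -!scaler_nat (GRing.natr_mod_pchar pK).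
apply: leq_trans (_ : #|codom phi| <= _)%N.
  by apply: subset_leq_card; apply/subsetP => M _; apply: sur.
by apply: leq_trans (leq_image_card _ _) _; rewrite card_ffun !card_ord.
Qed.
Lemma det_expr (R : comNzRingType) n (M : 'M[R]_n.+1) k : \det (M ^+ k) = \det M ^+ k.
Proof.
elim: k => [|k IH]; first by rewrite !expr0 det1.
by rewrite !exprS det_mulmx IH.
Qed.

Lemma poly_frob (K : fieldType) p (pK : p \in [pchar K]) (q : {poly K}) :
  q ^+ p = (map_poly (pFrobenius_aut pK) q) \Po 'X^p.
Proof.
have pP : p \in [pchar {poly K}] by rewrite (pchar_poly K).
elim/poly_ind: q => [|q c IH].
  by rewrite map_poly0 comp_poly0 expr0n /= gtn_eqF // prime_gt0 // (pcharf_prime pK).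
rewrite -(pFrobenius_autE pP) (pFrobenius_autD_comm pP); last exact: mulrC.
rewrite !rmorphD /= !rmorphM /= map_polyC map_polyX comp_polyX comp_polyC.
rewrite !pFrobenius_autE IH; congr (_ * _ + _).
by rewrite /= pFrobenius_autE rmorphXn.
Qed.

Lemma tr_frob (K : fieldType) p (pK : p \in [pchar K]) n (X : 'M[K]_n) :
  \tr (X ^+ p) = \tr X ^+ p.
Proof.
have p_pr := pcharf_prime pK; have p_gt0 := prime_gt0 p_pr.
case: n X => [|n'] X.
  by rewrite /mxtrace !big_ord0 expr0n gtn_eqF.
have pP : p \in [pchar {poly K}] by rewrite (pchar_poly K).
have pM : p \in [pchar 'M[{poly K}]_n'.+1].
  apply/andP; split => //.
  have -> : (p%:R : 'M[{poly K}]_n'.+1) = (p%:R : {poly K})%:M.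
    by rewrite -scalemx1 scaler_nat.
  by rewrite (pcharf0 pP) raddf0.
set P := char_poly_mx X.
have PP : P ^+ p = map_mx (comp_poly 'X^p) (char_poly_mx (X ^+ p)).
  rewrite /P /char_poly_mx -(pFrobenius_autE pM) (pFrobenius_autD_comm pM); last first.
    by rewrite /GRing.comm; exact: (esym (scalar_mxC _ _)).
  rewrite pFrobenius_autN !pFrobenius_autE -!rmorphXn /=.
  apply/matrixP=> i j; rewrite !mxE rmorphB /= rmorphMn /= comp_polyX comp_polyC.
  done.
have E : char_poly X ^+ p = char_poly (X ^+ p) \Po 'X^p.
  by rewrite /char_poly -det_expr -/P PP det_map_mx.
have := congr1 (fun q : {poly K} => q`_(p * n')) E.
rewrite /= poly_frob coef_comp_poly_Xn // coef_comp_poly_Xn // dvdn_mulr // mulKn //.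
rewrite coef_map /= !(char_poly_trace _ (ltn0Sn n')) /= pFrobenius_autN pFrobenius_autE.
by move/oppr_inj.
Qed.

Lemma tr_frobn (K : fieldType) p (pK : p \in [pchar K]) n (X : 'M[K]_n) j :
  \tr (X ^+ (p ^ j)) = \tr X ^+ (p ^ j).
Proof.
elim: j => [|j IH]; first by rewrite !expr1.
by rewrite expnSr !exprM tr_frob // IH.
Qed.

Lemma tr_delta (K : fieldType) n' (a : K) : \tr (a *: (delta_mx ord0 ord0 : 'M[K]_n'.+1)) = a.
Proof.
rewrite mxtraceZ /mxtrace (bigD1 ord0) //= big1 ?addr0; first by rewrite mxE !eqxx mulr1.
by move=> i /negbTE ni0; rewrite mxE ni0.
Qed.

Lemma abs_case (K : finFieldType) p k (gT : finGroupType) (G : {group gT}) n'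
   (rG : mx_representation K G n'.+1) :
  p \in [pchar K] -> #|K| = (p ^ k)%N -> (forall M, inS rG M) -> (k <= exponent G)%N.
Proof.
move=> pK cardK hall.
have p_pr := pcharf_prime pK; have p_gt1 := prime_gt1 p_pr.
have e_gt0 := exponent_gt0 G; set e := exponent G in e_gt0 *.
pose f (j : 'I_e.+1) : 'I_e := Ordinal (ltn_pmod (p ^ j) e_gt0).
have : ~~ injectiveb f.
  by apply/negP => /injectiveP inj; have := leq_card f inj; rewrite !card_ord ltnn.
case/injectivePn => i1 [i2 ne12 fe].
have [j1 [j2 [lt12 le2 eqj]]] : exists j1 j2, [/\ (j1 < j2)%N, (j2 <= e)%N &
    p ^ j1 = p ^ j2 %[mod e]].
  have := congr1 val fe => /= eq12.
  case: (ltngtP i1 i2) => [lt|lt|eqi]; last by rewrite (val_inj eqi) eqxx in ne12.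
    by exists i1, i2; split => //; rewrite -ltnS.
  by exists i2, i1; split => //; rewrite -ltnS.
set M := (j2 - j1)%N.
have eM : (p ^ j2 = p ^ M * p ^ j1)%N by rewrite -expnD subnK // ltnW.
have key : forall g, g \in G -> \tr (rG g) ^+ (p ^ M) = \tr (rG g).
  move=> g Gg; apply: (frobn_inj pK (j := j1)).
  rewrite -exprM -eM -!(tr_frobn pK) -!repr_mxX //; congr (\tr (rG _)).
  apply/eqP; rewrite eq_expg_mod_order.
  have dg := dvdn_exponent Gg.
  by rewrite -(modn_dvdm _ dg) -eqj (modn_dvdm _ dg).
have allS : forall X, inS rG X -> \tr X ^+ (p ^ M) = \tr X.
  move=> X0; elim=> [|g X Gg _ IH]; first by rewrite mxtrace0 (frobn0 pK).
  by rewrite mxtraceD (frobnD pK) key // IH.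
have allK : forall a : K, a ^+ (p ^ M) = a.
  by move=> a; rewrite -(tr_delta n' a); apply: allS.
pose q : {poly K} := 'X^(p ^ M) - 'X.
have pM_gt1 : (1 < p ^ M)%N by rewrite -(expn0 p) ltn_exp2l // subn_gt0.
have szq : size q = (p ^ M).+1.
  by rewrite /q size_polyDl size_polyXn // size_polyN size_polyX ltnS.
have qn0 : q != 0 by rewrite -size_poly_eq0 szq.
have hr : all (root q) (enum K).
  by apply/allP => a _; rewrite /root /q !hornerE allK subrr.
have := max_poly_roots qn0 hr (enum_uniq _).
rewrite -cardE szq ltnS cardK leq_exp2l // => hk.
by apply: leq_trans hk (leq_trans (leq_subr _ _) le2).
Qed.
Section Wedd.
Variables (K : finFieldType) (gT : finGroupType) (G : {group gT}) (n' : nat).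
Variable rG : mx_representation K G n'.+1.
Hypothesis irrG : mx_irreducible rG.

Definition cpred : {pred 'M[K]_n'.+1} := fun M => centgmx rG M.

Lemma cpred_divring : divring_closed cpred.
Proof.
split.
- by rewrite /cpred unfold_in /=; apply/centgmxP=> x Gx; rewrite mul1mx mulmx1.
- move=> u v; rewrite /cpred !unfold_in /= => /centgmxP cu /centgmxP cv.
  by apply/centgmxP=> x Gx; rewrite mulmxBl mulmxBr cu ?cv.
- move=> u v; rewrite /cpred !unfold_in /= => /centgmxP cu /centgmxP cv.
  apply/centgmxP=> x Gx.
  have cvi : v^-1 *m rG x = rG x *m v^-1.
    case: (boolP (v \in unitmx)) => Uv.
      have : v^-1 *m (v *m rG x) *m v^-1 = v^-1 *m (rG x *m v) *m v^-1 by rewrite cv.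
      by rewrite !mulmxA -[v^-1 *m v]/(v^-1 * v) mulVr // mul1mx -!mulmxA -[v *m v^-1]/(v * v^-1) mulrV // mulmx1.
    by rewrite invr_out // cv.
  by rewrite -[u / v]/(u *m v^-1) -mulmxA cvi !mulmxA cu.
Qed.

HB.instance Definition _ := GRing.isDivringClosed.Build _ cpred cpred_divring.

Inductive CT := mkCT x & x \in cpred.
Definition vCT u := let: mkCT x _ := u in x.
HB.instance Definition _ := [isSub for vCT].
HB.instance Definition _ := [Choice of CT by <:].
HB.instance Definition _ := [SubChoice_isSubUnitRing of CT by <:].
HB.instance Definition _ := [Finite of CT by <:].

Lemma CT_dom : GRing.integral_domain_axiom CT.
Proof.
move=> x y xy0; case: (eqVneq x 0) => [//| nx0] /=.
have cx : centgmx rG (vCT x) by have := valP x; rewrite /cpred unfold_in.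
have ux : vCT x \in unitmx.
  apply: (mx_Schur irrG cx); apply: contra nx0 => /eqP h; apply/eqP; apply: val_inj; exact: h.
have : vCT (x * y) = vCT x *m vCT y by [].
rewrite xy0 => h; apply/eqP; apply: val_inj => /=.
have : invmx (vCT x) *m (vCT x *m vCT y) = 0 by rewrite -h; exact: mulmx0.
by rewrite mulmxA mulVmx // mul1mx.
Qed.

Lemma cent_comm A B : centgmx rG A -> centgmx rG B -> A *m B = B *m A.
Proof.
move=> cA cB.
have hA : A \in cpred by rewrite /cpred unfold_in.
have hB : B \in cpred by rewrite /cpred unfold_in.
have := finDomain_mulrC CT_dom (mkCT hA) (mkCT hB).
by move/(congr1 vCT).
Qed.
End Wedd.

Import MatrixGenField.

Section Transfer.
Variables (K : fieldType) (gT : finGroupType) (G : {group gT}) (n' : nat).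
Variables (rG : mx_representation K G n'.+1) (B : 'M[K]_n'.+1).
Hypotheses (irrG : mx_irreducible rG) (cGB : centgmx rG B).

Local Notation FB := (gen_of irrG cGB).
Local Notation rGB := (gen_repr irrG cGB).

Definition Psi (M : 'M[K]_n'.+1) : 'M[FB]_(gen_dim B) :=
  \matrix_i in_gen irrG cGB (row (gen_base B 0 i) M).

Lemma rowPsi M i : row i (Psi M) = in_gen irrG cGB (row (gen_base B 0 i) M).
Proof. exact: rowK. Qed.

Lemma Psi_add M N : Psi (M + N) = Psi M + Psi N.
Proof.
apply/row_matrixP => i; rewrite rowPsi (linearD (row i)).
rewrite (linearD (row (gen_base B 0 i))) in_genD.
by congr (_ + _); apply: esym; apply: rowPsi.
Qed.

Lemma Psi0 : Psi 0 = 0.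
Proof.
apply/row_matrixP => i; rewrite rowK row0 linear0.
exact: in_gen0.
Qed.

Lemma Psi_rG g : Psi (rG g) = rGB g.
Proof. by []. Qed.

Lemma inS_Psi M : inS rG M -> inS rGB (Psi M).
Proof.
elim=> [|g M' Gg _ IH]; first by rewrite Psi0; apply: inS0.
by rewrite Psi_add Psi_rG; apply: inSg.
Qed.

Lemma Psi_mxval x : Psi (mxval x) = x%:M.
Proof.
apply/row_matrixP => i; rewrite rowK.
have h1 : in_gen irrG cGB (row (gen_base B 0 i) 1%:M) = row i 1%:M.
  have := congr1 (row i) (repr_mx1 rGB).
  by rewrite /= /gen_mx rowK repr_mx1.
rewrite -[mxval x]mul1mx row_mul -[row _ 1%:M](in_genK irrG cGB) -val_genZ val_genK h1.
by apply/rowP => j; rewrite !mxE mulr_natr.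
Qed.

Lemma inS_mxval (x : FB) : (forall a : K, inS rG a%:M) -> inS rG B -> inS rG (mxval x).
Proof.
move=> hS hB; rewrite /mxval; elim/poly_ind: (pval x) => [|q c IH].
  by rewrite rmorph0; apply: inS0.
rewrite rmorphD rmorphM /= horner_mx_X horner_mx_C; apply: inS_add => //.
by rewrite -mulmxE; apply: inS_mul.
Qed.

End Transfer.

Lemma main_ind p (gT : finGroupType) (G : {group gT}) N :
  forall (K : finFieldType) n (rG : mx_representation K G n) k,
  (n <= N)%N -> p \in [pchar K] -> #|K| = (p ^ k)%N -> mx_irreducible rG ->
  (forall a : K, inS rG a%:M) -> ((n * k) ^ 2 <= exponent G * #|G|)%N.
Proof.
elim: N => [|N IH] K n rG k leN pK cK irrG hS.
  by case/mx_irrP: irrG => n_gt0 _; have := leq_trans n_gt0 leN.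
case: n rG leN irrG hS => [|n'] rG leN irrG hS; first by case/mx_irrP: irrG.
have p_gt1 := prime_gt1 (pcharf_prime pK).
case: (boolP (mx_absolutely_irreducible rG)) => [absG | nabsG].
  have hall : forall M, inS rG M.
    move=> M; apply: inS_envelop hS _.
    by case/andP: absG => _ full; apply: submx_full.
  have hc := inS_card pK hall.
  rewrite card_mx cK -expnM leq_exp2l // in hc.
  have hk := abs_case pK cK hall.
  have -> : ((n'.+1 * k) ^ 2 = k * (k * (n'.+1 * n'.+1)))%N.
    by rewrite expnMn !expnS !expn0 !muln1 mulnC -mulnA.
  exact: leq_mul hk hc.
have [B cB nsB] : exists2 B, (B \in 'C(enveloping_algebra_mx rG))%MS & ~~ is_scalar_mx B.
  apply/has_non_scalar_mxP; first exact: scalar_mx_cent.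
  rewrite ltnNge; apply: contra nabsG; exact: cent_mx_scalar_abs_irr.
have cGB : centgmx rG B by rewrite -memmx_cent_envelop.
have BE : (B \in enveloping_algebra_mx rG)%MS.
  apply: submx_trans (mx_Jacobson_density irrG).
  apply/cent_mxP => A hA; apply: (cent_comm irrG) => //.
  by rewrite -memmx_cent_envelop.
have hB : inS rG B := inS_envelop hS BE.
have d_gt1 : (1 < degree_mxminpoly B)%N by rewrite ltnNge mxminpoly_linear_is_scalar.
have pFB : p \in [pchar (gen_of irrG cGB)].
  apply/andP; split; first exact: pcharf_prime pK.
  by rewrite -(rmorph_nat (gen irrG cGB)) (pcharf0 pK) rmorph0.
have cFB : #|{: gen_of irrG cGB}| = (p ^ (k * degree_mxminpoly B))%N.
  by rewrite card_gen cK -expnM.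
have dimf := gen_dim_factor irrG cGB.
have hSB : forall x : gen_of irrG cGB, inS (gen_repr irrG cGB) x%:M.
  by move=> x; rewrite -Psi_mxval; apply: inS_Psi; apply: inS_mxval.
have leB : (gen_dim B <= N)%N.
  rewrite -ltnS (leq_trans _ leN) // -dimf -{1}[gen_dim B]muln1 ltn_pmul2l //.
  by rewrite lt0n; apply/eqP => h; rewrite h mul0n in dimf.
have := IH _ _ (gen_repr irrG cGB) _ leB pFB cFB (gen_mx_irr irrG cGB) hSB.
by rewrite mulnA mulnAC dimf.
Qed.

Lemma inS_muln (K : fieldType) (gT : finGroupType) (G : {group gT}) n
  (rG : mx_representation K G n) M k : inS rG M -> inS rG (M *+ k).
Proof.
move=> hM; elim: k => [|k IH]; first by rewrite mulr0n; apply: inS0.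
by rewrite mulrS; apply: inS_add.
Qed.

Unset Implicit Arguments.

Theorem lemma3p2 (gT : finGroupType) (Q : {group gT}) (p : nat) (n : nat)
    (rQ : mx_representation 'F_p Q n) :
  prime p -> mx_irreducible rQ -> (n ^ 2 <= exponent Q * #|Q|)%N.
Proof.
move=> p_pr irrQ.
have cF : #|'F_p| = (p ^ 1)%N by rewrite card_Fp // expn1.
have hS : forall a : 'F_p, inS rQ a%:M.
  move=> a.
  have -> : a = (a : nat)%:R.
    apply: val_inj; rewrite /= val_Fp_nat // modn_small //.
    suff h : forall m, (m < (Zp_trunc (pdiv p)).+2)%N -> (m < p)%N by apply: h; exact: ltn_ord a.
    by move=> m; rewrite (Fp_cast p_pr).
  have -> : ((a : nat)%:R : 'F_p)%:M = (1%:M : 'M['F_p]_n) *+ a.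
    by rewrite -[LHS]scalemx1 scaler_nat.
  case: n rQ irrQ => [|n'] rQ irrQ; first by case/mx_irrP: irrQ.
  by rewrite -(repr_mx1 rQ); apply: inS_muln; apply: inS_rG; apply: group1.
have := @main_ind p gT Q n 'F_p n rQ 1 (leqnn n) (pchar_Fp p_pr) cF irrQ hS.
by rewrite muln1.
Qed.
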